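(* Let $c$ be the minimum value such that $\Pr_\tau[S]\le c\,|S|$ for all intervals $S\subseteq[0,1]$ with $|S|\ge2\rho$. For any budget $K\le M$, run the LEA algorithm with $\gamma=\sqrt{V_{\mathcal U^*}/(8cM)}$ (so $\rho=\gamma\sqrt\epsilon$). Then it outputs a $(1-\epsilon,\delta)$-optimal allocation using $O\big(M\ln(2M/\delta)/\rho^2\big)$ samples.
   Context: A population is partitioned into $M$ units $u\in\{1,\dots,M\}$ with unknown treatment effects $\tau(u)\in[0,1]$, pairwise distinct. $\Pr_\tau[S]=|\{u:\tau(u)\in S\}|/M$. For budget $K\in\{1,\dots,M\}$, $\mathcal U^*$ is the set of the $K$ units with largest $\tau(u)$ and $V_{\mathcal U^*}=\sum_{u\in\mathcal U^*}\tau(u)$; an allocation $S$ of $K$ units is $(1-\epsilon,\delta)$-optimal if $\sum_{u\in S}\tau(u)\ge(1-\epsilon)V_{\mathcal U^*}$ with probability at least $1-\delta$. An estimation oracle, given $u$ and $\epsilon',\delta'$, returns $\hat\tau(u)$ with $|\hat\tau(u)-\tau(u)|\le\epsilon'$ with probability $\ge1-\delta'$ using $O(\ln(2/\delta')/\epsilon'^2)$ samples. The LEA algorithm: on input $M$ units, budget $K$, parameters $\epsilon,\delta,\gamma>0$, set $\rho=\gamma\sqrt\epsilon$, obtain for each unit $u$ a $(\rho,\delta/M)$-accurate estimate $\hat\tau(u)$ from the oracle, and output the $K$ units with the largest $\hat\tau(u)$. *)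

(* Defs.v *)
From HB Require Import structures.
From mathcomp Require Import all_boot all_order all_algebra.
From mathcomp Require Import all_classical all_reals all_analysis.
Set Implicit Arguments. Unset Strict Implicit. Unset Printing Implicit Defensive.
Import Order.TTheory GRing.Theory Num.Theory.
Local Open Scope ring_scope.

Definition Prtau {R : realType} {M : nat} (tau : 'I_M -> R) (S : interval R) : R :=
  #|[set u : 'I_M | tau u \in S]|%:R / M%:R.

Definition topK {R : realType} {M : nat} (f : 'I_M -> R) (K : nat)
  (A : {set 'I_M}) : Prop :=
  #|A| = K /\ (forall u v, u \in A -> v \notin A -> f v <= f u).

Definition itv_ab {R : realType} (bl : bool) (a : R) (br : bool) (b : R) : interval R :=
  Interval (BSide bl a) (BSide br b).

Definition density_bound {R : realType} {M : nat} (tau : 'I_M -> R) (rho c : R) : Prop :=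
  forall (bl br : bool) (a b : R), 0 <= a -> b <= 1 -> a <= b -> 2 * rho <= b - a ->
    Prtau tau (itv_ab bl a br b) <= c * (b - a).

Definition min_density_const {R : realType} {M : nat} (tau : 'I_M -> R) (rho c : R) : Prop :=
  density_bound tau rho c /\ (forall c', density_bound tau rho c' -> c <= c').

(* Main.v *)
Require Import Defs.
From HB Require Import structures.
From mathcomp Require Import all_boot all_order all_algebra.
From mathcomp Require Import all_classical all_reals all_analysis.
From mathcomp Require Import lra ring.
Import Order.TTheory GRing.Theory Num.Theory.
Local Open Scope classical_set_scope.
Local Open Scope ring_scope.
Section S.
Context (R : realType) (d : measure_display) (T : measurableType d) (P : probability T R).

Lemma PE (X : set T) : measurable X -> exists2 x : R, P X = x%:E & 0 <= x <= 1.
Proof.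
move=> mX; have hf : P X \is a fin_num by apply: fin_num_measure.
exists (fine (P X)); first by rewrite fineK.
have h0 := measure_ge0 P X; have h1 := probability_le1 P mX.
by rewrite -lee_fin -[X in (_ <= X)%E]fineK // fineK // -lee_fin fineK // h0 h1.
Qed.

Lemma inter_bound (A B : set T) (a b : R) : measurable A -> measurable B ->
  (a%:E <= P A)%E -> (b%:E <= P B)%E -> ((a + b - 1)%:E <= P (A `&` B))%E.
Proof.
move=> mA mB ha hb.
have fA : (P A < +oo)%E by rewrite ltey_eq fin_num_measure.
have h : P (A `|` B) = (P A + P B - P (A `&` B))%E by apply: measureUfinl.
have le1 := probability_le1 P (measurableU _ _ mA mB).
have [x Ex _] := PE _ mA; have [y Ey _] := PE _ mB.
have [z Ez _] := PE _ (measurableI _ _ mA mB).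
rewrite h Ex Ey Ez in le1. rewrite -EFinD lee_fin in le1.

rewrite Ez lee_fin; rewrite Ex lee_fin in ha; rewrite Ey lee_fin in hb. lra.
Qed.

Lemma list_bound (I : eqType) (A : I -> set T) (q : R) (s : seq I) :
  (forall i, measurable (A i)) -> (forall i, ((1 - q)%:E <= P (A i))%E) ->
  measurable [set w | forall i, i \in s -> A i w] /\
  ((1 - (size s)%:R * q)%:E <= P [set w | forall i, i \in s -> A i w])%E.
Proof.
move=> mA hA; elim: s => [|i s [ms hs]] /=.
  have -> : [set w | forall i, i \in [::] -> A i w] = setT.
    by apply/seteqP; split=> w //= _ i; rewrite in_nil.
  by rewrite probability_setT mul0r subr0; split.
have -> : [set w | forall j, j \in i :: s -> A j w] = A i `&` [set w | forall i, i \in s -> A i w].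
  apply/seteqP; split=> w /=.
    by move=> h; split; [apply: h; rewrite mem_head | move=> j js; apply: h; rewrite in_cons js orbT].
  by move=> [h1 h2] j; rewrite in_cons => /orP[/eqP->//|/h2].
split; first exact: measurableI.
apply: le_trans (inter_bound _ _ _ _ (mA i) ms (hA i) hs).
rewrite lee_fin -addn1 natrD; lra.
Qed.
End S.

Lemma det (R : realType) (M K : nat) (tau f : 'I_M -> R) (U S : {set 'I_M}) (rho c : R) :
 (forall u, 0 <= tau u <= 1) -> topK tau K U -> topK f K S ->
 (forall u, `|f u - tau u| <= rho) -> 0 < rho -> 2 * rho <= 1 ->
 density_bound tau rho c -> (0 < M)%N ->
 \sum_(u in U) tau u - \sum_(u in S) tau u <= 4 * rho ^+ 2 * c * M%:R.
Proof.
move=> t01 [cU tU] [cS tS] hf rho0 rho1 hd M0.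
have eI : S :&: U = U :&: S := finset.setIC S U.
rewrite (big_setID (A:=U) S) (big_setID (A:=S) U) eI /=.
set D2 := U :\: S; set D1 := S :\: U.
have cardE : #|D1| = #|D2|.
  have h1 := cardsID S U; have h2 := cardsID U S.
  rewrite eI cS in h2; rewrite cU in h1. 
  by apply/eqP; rewrite -(eqn_add2l #|U :&: S|) h1 h2.
set m := #|D2|.
have pair : forall u v, u \in D1 -> v \in D2 -> tau v <= tau u + 2 * rho.
  move=> u v; rewrite !inE => /andP[uU uS] /andP[vS vU].
  have := tS u v uS vS; have := hf u; have := hf v; rewrite !ler_distl => /andP[? ?] /andP[? ?].
  lra.
have Mpos : (0 : R) < M%:R by rewrite ltr0n.
have loss : \sum_(u in D2) tau u - \sum_(u in D1) tau u <= 2 * rho * m%:R.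
  have dbl : \sum_(u in D1) \sum_(v in D2) tau v <= \sum_(u in D1) \sum_(v in D2) (tau u + 2 * rho).
    by apply: ler_sum => u uD1; apply: ler_sum => v vD2; apply: pair.
  have e3 : \sum_(u in D1) \sum_(v in D2) (tau u + 2 * rho) = \sum_(u in D1) (tau u + 2 * rho) *+ m.
    by apply: eq_bigr => u _; rewrite sumr_const.
  rewrite e3 sumr_const sumrMnl big_split /= sumr_const cardE -/m in dbl.
  rewrite -(mulr_natl (2 * rho)) -(mulr_natl (_ + _)) -(mulr_natl (\sum_(i in D2) tau i)) in dbl.
  case: (posnP m) => [m0|mpos].
    have e2 : D2 = finset.set0 by apply/eqP; rewrite -cards_eq0 -/m m0.
    have e1 : D1 = finset.set0 by apply/eqP; rewrite -cards_eq0 cardE -/m m0.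
    by rewrite e1 e2 !big_set0 m0 mulr0 subrr.
  have mpos' : (0 : R) < m%:R by rewrite ltr0n.
  have : m%:R * \sum_(u in D2) tau u <= m%:R * (\sum_(i in D1) tau i + 2 * rho * m%:R).
    by rewrite [2 * rho * _]mulrC.
  rewrite ler_pM2l //; lra.
have c0 : 0 <= c.
  have h : Prtau tau (itv_ab true 0 false (2 * rho)) <= c * (2 * rho - 0).
    by apply: hd => //; rewrite ?subr0 //; lra.
  rewrite subr0 in h.
  have : 0 <= Prtau tau (itv_ab true 0 false (2 * rho)) by rewrite /Prtau divr_ge0.
  move=> h2; have := le_trans h2 h; rewrite pmulr_lge0 //; exact: mulr_gt0.
have mb : m%:R <= 2 * rho * c * M%:R.
  case: (posnP m) => [->|mpos]; first by rewrite !mulr_ge0 // ?ler0n //; lra.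
  have /card_gt0P [v0 v0D2] := mpos.
  have := v0D2; rewrite inE => /andP[v0S v0U].
  pose a := if 2 * rho <= tau v0 then tau v0 - 2 * rho else 0.
  have sub : D1 \subset [set u | tau u \in itv_ab true a false (a + 2 * rho)]%SET.
    apply/fintype.subsetP => u uD1; rewrite inE /itv_ab in_itv /=.
    have h1 := pair u v0 uD1 v0D2.
    have := uD1; rewrite inE => /andP[uU uS].
    have h2 := tU v0 u v0U uU.
    have := t01 u; have := t01 v0; move=> /andP[? ?] /andP[? ?].
    rewrite /a; case: ifP => H; apply/andP; split; lra.
  have a0 : 0 <= a by rewrite /a; case: ifP => H //; lra.
  have a1 : a + 2 * rho <= 1.
    by rewrite /a; case: ifP => H; have := t01 v0; move=> /andP[? ?]; lra.
  have hc : Prtau tau (itv_ab true a false (a + 2 * rho)) <= c * (a + 2 * rho - a).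
    by apply: hd => //; lra.
  rewrite /Prtau ler_pdivrMr // in hc.
  rewrite /m -cardE.
  apply: le_trans (_ : _ <= (#|[set u | tau u \in itv_ab true a false (a + 2 * rho)]%SET|)%:R) _.
    by rewrite ler_nat subset_leq_card.
  apply: le_trans hc _; have -> : a + 2 * rho - a = 2 * rho by lra.
  by rewrite (mulrC c).
have : 2 * rho * m%:R <= 2 * rho * (2 * rho * c * M%:R) by rewrite ler_pM2l //; exact: mulr_gt0.
move=> h; have e : 2 * rho * (2 * rho * c * M%:R) = 4 * rho ^+ 2 * c * M%:R by ring.
rewrite -e; lra.
Qed.

Theorem theorem4 (R : realType) (d : measure_display) (T : measurableType d)
  (P : probability T R)
  (M K : nat) (tau : 'I_M -> R) (Ustar : {set 'I_M})
  (eps delta c gamma rho : R)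
  (* estimation oracle: est e' d' u is the returned estimate of tau u *)
  (est : R -> R -> 'I_M -> T -> R)
  (* samples e' d' u = number of samples used by that oracle call *)
  (samples : R -> R -> 'I_M -> nat) (Cor : R)
  (* output of LEA: K units of largest estimate (any tie-breaking) *)
  (sel : T -> {set 'I_M}) :
  (0 < K)%N -> (K <= M)%N ->
  (forall u, 0 <= tau u <= 1) -> injective tau ->
  topK tau K Ustar ->
  0 < eps -> 0 < delta < 1 ->
  (* oracle guarantees *)
  (forall e' d' u, measurable_fun setT (est e' d' u)) ->
  (forall e' d' u, 0 < e' -> 0 < d' <= 1 ->
     ((1 - d')%:E <= P [set w : T | (`|est e' d' u w - tau u| <= e')%R])%E) ->
  0 < Cor ->
  (forall e' d' u, 0 < e' -> 0 < d' <= 1 ->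
     (samples e' d' u)%:R <= Cor * ln (2 / d') / e' ^+ 2) ->
  (* parameters of the theorem *)
  min_density_const tau rho c ->
  gamma = Num.sqrt ((\sum_(u in Ustar) tau u) / (8 * c * M%:R)) ->
  0 < gamma ->
  rho = gamma * Num.sqrt eps ->
  (* LEA output *)
  (forall w, topK (fun u => est rho (delta / M%:R) u w) K (sel w)) ->
  (forall A, measurable [set w : T | sel w = A]) ->
  ((1 - delta)%:E <=
     P [set w : T | ((1 - eps) * (\sum_(u in Ustar) tau u) <= \sum_(u in sel w) tau u)%R])%E
  /\
  \sum_(u < M) (samples rho (delta / M%:R) u)%:R
     <= Cor * M%:R * ln (2 * M%:R / delta) / rho ^+ 2.
Proof.
move=> K0 KM t01 tinj hU eps0 /andP[d0 d1] mest hest Cor0 hsamp [hd hmin] Eg g0 Erho hsel msel.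
have M0 : (0 < M)%N by apply: leq_trans KM.
have Mpos : (0:R) < M%:R by rewrite ltr0n.
have rho0 : 0 < rho.
  by rewrite Erho mulr_gt0 // sqrtr_gt0.
have q0 : 0 < delta / M%:R by rewrite divr_gt0.
have q1 : delta / M%:R <= 1.
  rewrite ler_pdivrMr // mul1r; apply: le_trans (ltW d1) _.
  by rewrite ler1n.
have q01 : 0 < delta / M%:R <= 1 by rewrite q0 q1.
set q := delta / M%:R in q0 q1 q01 *.
split; last first.
  have hs : forall u, (samples rho q u)%:R <= Cor * ln (2 / q) / rho ^+ 2.
    by move=> u; apply: hsamp.
  apply: le_trans (ler_sum _ (fun u _ => hs u)) _.
  rewrite sumr_const card_ord -[_ *+ M]mulr_natl.
  have -> : forall t : R, t / q = t * M%:R / delta.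
    move=> t; rewrite /q; field; apply/andP; split; rewrite gt_eqF //.
  rewrite (_ : M%:R * _ = Cor * M%:R * ln (2 * M%:R / delta) / rho ^+ 2) ?lexx //.
  ring.
have rho1 : 2 * rho <= 1.
  rewrite leNgt; apply/negP => H.
  have : density_bound tau rho (c - 1).
    move=> bl br a b a0 b1 ab hab; lra.
  move/hmin; lra.
set V := \sum_(u in Ustar) tau u in Eg *.
have V0 : 0 <= V by apply: sumr_ge0 => u _; have /andP[] := t01 u.
set x := V / (8 * c * M%:R) in Eg.
have x0 : 0 < x by rewrite -sqrtr_gt0 -Eg.
have cn0 : c != 0.
  apply/eqP => c0; move: x0; rewrite /x c0 mulr0 mul0r invr0 mulr0; lra.
have rho2 : rho ^+ 2 = x * eps.
  by rewrite Erho exprMn Eg !sqr_sqrtr // ltW.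
have key : 4 * rho ^+ 2 * c * M%:R = eps * V / 2.
  rewrite rho2 /x; field.
  by apply/andP; split => //; rewrite gt_eqF.
pose A u := [set w | `|est rho q u w - tau u| <= rho].
have mA : forall u, measurable (A u).
  move=> u; have := mest rho q u measurableT _ (measurable_itv `[tau u - rho, tau u + rho]).
  rewrite setTI; congr measurable; apply/seteqP; split => w /=;
    by rewrite /A /= in_itv /= ler_distl.
have hA : forall u, ((1 - q)%:E <= P (A u))%E by move=> u; apply: hest.
have [mE hE] := @list_bound _ _ _ P _ A q (enum 'I_M) mA hA.
rewrite size_enum_ord in hE.
have -> : (1 - delta = 1 - M%:R * q) by rewrite /q mulrC divfK // gt_eqF.
apply: le_trans hE _.
pose G := [set B : {set 'I_M} | (1 - eps) * V <= \sum_(u in B) tau u].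
have mT : measurable [set w | (1 - eps) * V <= \sum_(u in sel w) tau u].
  have -> : [set w | (1 - eps) * V <= \sum_(u in sel w) tau u] = \bigcup_(B in G) [set w | sel w = B].
    apply/seteqP; split => w /=.
      by move=> h; exists (sel w).
    by move=> [B hB ->].
  apply: fin_bigcup_measurable; first exact: finite_finset.
  by move=> B _; apply: msel.
apply: le_measure; rewrite ?inE //.
move=> w /= hw.
have hf : forall u, `|est rho q u w - tau u| <= rho.
  by move=> u; apply: (hw u); rewrite mem_enum.
have := @det _ _ _ tau (fun u => est rho q u w) Ustar (sel w) rho c t01 hU (hsel w) hf rho0 rho1 hd M0.
rewrite key => h.
have : 0 <= eps * V by rewrite mulr_ge0 // ltW.
rewrite -/V in h; lra.
Qed.
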